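(* Let $c>0$ and $0<p<1$, and let $(p_n)$ be the symmetric orthonormal polynomials with recursion coefficients $\gamma_n=c(n+1)^p$. Then for every $\omega\in\mathbb{R}$, \[ 0<\lim_{n\to\infty}\frac{\sum_{k=0}^n p_k^2(\omega)}{(n+1)^{1-p}}<\infty, \] and the convergence of the limit is uniform on every compact subset of $\mathbb{R}$.
   Context: Given positive reals $\gamma_n>0$ ($n\ge0$), set $\gamma_{-1}=1$, $p_{-1}(\omega)=0$, $p_0(\omega)=1$, and define polynomials by $\gamma_n p_{n+1}(\omega)=\omega p_n(\omega)-\gamma_{n-1}p_{n-1}(\omega)$ for $n\ge 0$. *)

(* Defs.v *)
From Stdlib Require Export Reals.
Open Scope R_scope.

(* opair g w n = (p_n(w), p_{n+1}(w)) for the recursion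
   g n * p_{n+1} = w p_n - g (n-1) p_{n-1}, with g(-1) = 1, p_{-1} = 0, p_0 = 1. *)
Fixpoint opair (g : nat -> R) (w : R) (n : nat) : R * R :=
  match n with
  | O => (1, w / g O)
  | S m => let '(a, b) := opair g w m in (b, (w * b - g m * a) / g (S m))
  end.

Definition orthpoly (g : nat -> R) (n : nat) (w : R) : R := fst (opair g w n).

Definition gam (c p : R) (n : nat) : R := c * Rpower (INR n + 1) p.

Definition sqsum (g : nat -> R) (n : nat) (w : R) : R :=
  sum_f_R0 (fun k => (orthpoly g k w) ^ 2) n.

(* Main.v *)
Require Import Defs.
From Stdlib Require Import Reals Lra Lia Psatz ClassicalEpsilon.
Open Scope R_scope.


Lemma bern (s r : R) : 0 < s -> 0 <= r <= 1 -> Rpower s r <= 1 + r*(s-1).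
Proof.
  intros hs hr. unfold Rpower.
  set (L := ln s).
  assert (hsL : s = exp L) by (unfold L; rewrite exp_ln; auto).
  set (E := exp (r * L)).
  assert (hE : 0 < E) by apply exp_pos.
  assert (h1 : exp L = E * exp ((1-r)*L)).
  { unfold E; rewrite <- exp_plus; f_equal; ring. }
  assert (h2 : 1 = E * exp (-(r*L))).
  { unfold E; rewrite <- exp_plus. replace (r*L + - (r*L)) with 0 by ring. now rewrite exp_0. }
  pose proof (exp_ineq1_le ((1-r)*L)) as i1.
  pose proof (exp_ineq1_le (-(r*L))) as i2.
  rewrite hsL. fold E.
  assert (E * (1 + (1-r)*L) <= exp L) by (rewrite h1; apply Rmult_le_compat_l; lra).
  assert (E * (1 + -(r*L)) <= 1) by (rewrite h2 at 2; apply Rmult_le_compat_l; lra).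
  nra.
Qed.

Lemma rp_pos t r : 0 < Rpower t r.
Proof. apply exp_pos. Qed.

Lemma rp_split t r : 0 < t -> Rpower t (1 - r) = t / Rpower t r.
Proof.
  intro ht. unfold Rminus. rewrite Rpower_plus, Rpower_1, Rpower_Ropp by auto.
  unfold Rdiv; ring.
Qed.

Lemma rp_up t r : 1 <= t -> 0 <= r <= 1 -> Rpower (t+1) r <= Rpower t r + r * Rpower t r / t.
Proof.
  intros ht hr.
  replace (t+1) with (t * (1 + /t)) by (field; lra).
  rewrite <- Rpower_mult_distr.
  2: lra.
  2: { assert (0 < /t) by (apply Rinv_0_lt_compat; lra). lra. }
  pose proof (bern (1 + /t) r) as hb.
  assert (0 < /t) by (apply Rinv_0_lt_compat; lra).
  specialize (hb ltac:(lra) hr).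
  pose proof (rp_pos t r).
  replace (Rpower t r + r * Rpower t r / t) with (Rpower t r * (1 + r * (1 + /t - 1))) by (field; lra).
  apply Rmult_le_compat_l; lra.
Qed.

Lemma rp_down t r : 1 < t -> 0 <= r <= 1 -> Rpower (t-1) r <= Rpower t r - r * Rpower t r / t.
Proof.
  intros ht hr.
  assert (0 < /t) by (apply Rinv_0_lt_compat; lra).
  assert (/t < 1) by (rewrite <- Rinv_1; apply Rinv_lt_contravar; lra).
  replace (t-1) with (t * (1 - /t)) by (field; lra).
  rewrite <- Rpower_mult_distr by lra.
  pose proof (bern (1 - /t) r ltac:(lra) hr) as hb.
  pose proof (rp_pos t r).
  replace (Rpower t r - r * Rpower t r / t) with (Rpower t r * (1 + r * (1 - /t - 1))) by (field; lra).
  apply Rmult_le_compat_l; lra.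
Qed.

Lemma rp_large r T : 0 < r -> exists N : nat, forall n, (N <= n)%nat -> T <= Rpower (INR n + 1) r.
Proof.
  intro hr.
  destruct (INR_unbounded (Rpower (Rabs T + 1) (/r))) as [N HN].
  exists N. intros n hn.
  apply le_INR in hn.
  assert (Rabs T + 1 = Rpower (Rpower (Rabs T + 1) (/r)) r) as E.
  { rewrite Rpower_mult. replace (/r * r) with 1 by (field; lra).
    rewrite Rpower_1; auto. pose proof (Rabs_pos T); lra. }
  apply Rle_trans with (Rabs T + 1).
  { pose proof (Rle_abs T); lra. }
  rewrite E. apply Rle_Rpower_l. lra.
  split. apply rp_pos. lra.
Qed.

Definition Ap (p : R) (n : nat) := Rpower (INR n + 1) p.
Definition ee (c p : R) (n : nat) := gam c p (S n) - gam c p n.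

Lemma tpos n : 1 <= INR n + 1.
Proof. pose proof (pos_INR n); lra. Qed.

Lemma SINR1 n : INR (S n) + 1 = (INR n + 1) + 1.
Proof. rewrite S_INR; ring. Qed.

Lemma Ap1 r : Ap r 0 = 1.
Proof. unfold Ap, Rpower. simpl. replace (0+1) with 1 by ring. rewrite ln_1, Rmult_0_r, exp_0; auto. Qed.

Lemma gam_pos c p n : 0 < c -> 0 < gam c p n.
Proof. intros; unfold gam; pose proof (rp_pos (INR n + 1) p); nra. Qed.

Lemma Ap_incr p n : 0 <= p -> Ap p n <= Ap p (S n).
Proof. intros; unfold Ap. rewrite SINR1. apply Rle_Rpower_l; auto. pose proof (tpos n); lra. Qed.

Lemma gam_incr c p n : 0 < c -> 0 <= p -> gam c p n <= gam c p (S n).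
Proof. intros; unfold gam; fold (Ap p n) (Ap p (S n)). pose proof (Ap_incr p n H0); nra. Qed.

Lemma gam_mono c p m n : 0 < c -> 0 <= p -> (m <= n)%nat -> gam c p m <= gam c p n.
Proof. intros hc hp h; induction h; [lra|]. pose proof (gam_incr c p m0 hc hp); lra. Qed.

Lemma ee_nonneg c p n : 0 < c -> 0 <= p -> 0 <= ee c p n.
Proof. intros; unfold ee; pose proof (gam_incr c p n H H0); lra. Qed.

Lemma ee_decr c p n : 0 < c -> 0 < p < 1 -> ee c p (S n) <= ee c p n.
Proof.
  intros hc hp. unfold ee, gam.
  set (t := INR (S n) + 1).
  assert (ht : 1 < t) by (unfold t; rewrite SINR1; pose proof (tpos n); lra).
  assert (E1 : INR (S (S n)) + 1 = t + 1) by (unfold t; rewrite (SINR1 (S n)); auto).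
  assert (E2 : INR n + 1 = t - 1) by (unfold t; rewrite SINR1; ring).
  rewrite E1, E2. fold t.
  pose proof (rp_up t p ltac:(lra) ltac:(lra)).
  pose proof (rp_down t p ltac:(lra) ltac:(lra)).
  assert (Rpower (t+1) p + Rpower (t-1) p <= 2 * Rpower t p) by lra.
  nra.
Qed.

Lemma ee_small c p n : 0 < c -> 0 < p < 1 -> ee c p n <= c * p / Rpower (INR n + 1) (1 - p).
Proof.
  intros hc hp. unfold ee, gam. rewrite SINR1.
  set (t := INR n + 1). assert (ht : 1 <= t) by apply tpos.
  pose proof (rp_up t p ht ltac:(lra)).
  rewrite rp_split by lra.
  pose proof (rp_pos t p).
  replace (c * p / (t / Rpower t p)) with (c * (p * Rpower t p / t)) by (field; lra).
  nra.
Qed.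

Lemma gam_large c p T : 0 < c -> 0 < p -> exists N : nat, forall n, (N <= n)%nat -> T <= gam c p n.
Proof.
  intros hc hp. destruct (rp_large p (T / c) hp) as [N HN]. exists N; intros n hn.
  specialize (HN n hn). unfold gam.
  replace T with (c * (T / c)) by (field; lra). apply Rmult_le_compat_l; lra.
Qed.

Definition Sg (c p : R) (n : nat) := sum_f_R0 (fun k => / gam c p k) n.

Lemma Sg_up c p n : 0 < c -> 0 < p < 1 ->
  c * (1 - p) * Sg c p n <= Rpower (INR n + 1) (1 - p) + (1 - p) - 1.
Proof.
  intros hc hp. induction n.
  - unfold Sg; simpl. unfold gam. fold (Ap p 0). rewrite Ap1.
    replace (0+1) with 1 by ring. unfold Rpower. rewrite ln_1, Rmult_0_r, exp_0.
    replace (c * (1 - p) * / (c * 1)) with (1 - p) by (field; lra). lra.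
  - unfold Sg in *. simpl sum_f_R0.
    set (t := INR (S n) + 1).
    assert (ht : 1 < t) by (unfold t; rewrite SINR1; pose proof (tpos n); lra).
    assert (E2 : INR n + 1 = t - 1) by (unfold t; rewrite SINR1; ring).
    rewrite E2 in IHn.
    pose proof (rp_down t (1-p) ht ltac:(lra)).
    rewrite (rp_split t p) in H by lra.
    assert (EG : gam c p (S n) = c * Rpower t p) by reflexivity.
    rewrite EG. pose proof (rp_pos t p).
    replace (c * (1 - p) * (sum_f_R0 (fun k : nat => / gam c p k) n + / (c * Rpower t p)))
      with (c * (1 - p) * sum_f_R0 (fun k : nat => / gam c p k) n + (1-p) * (t / Rpower t p) / t)
      by (field; lra).
    rewrite (rp_split t p) by lra. lra.
Qed.

Lemma Sg_low c p n : 0 < c -> 0 < p < 1 ->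
  Rpower (INR (S n) + 1) (1 - p) - 1 <= c * (1 - p) * Sg c p n.
Proof.
  intros hc hp. induction n.
  - unfold Sg; simpl. unfold gam. fold (Ap p 0). rewrite Ap1.
    pose proof (rp_up 1 (1-p) ltac:(lra) ltac:(lra)).
    replace (1+1) with 2 in H by ring. replace (0+1) with 1 by ring.
    replace (1+1) with 2 by ring.
    replace (Rpower 1 (1-p)) with 1 in H by (unfold Rpower; rewrite ln_1, Rmult_0_r, exp_0; auto).
    replace (c * (1 - p) * / (c * 1)) with (1 - p) by (field; lra). lra.
  - unfold Sg in *. simpl sum_f_R0.
    set (t := INR (S n) + 1) in *.
    assert (ht : 1 <= t) by apply tpos.
    assert (E1 : INR (S (S n)) + 1 = t + 1) by (unfold t; rewrite (SINR1 (S n)); auto).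
    rewrite E1.
    pose proof (rp_up t (1-p) ht ltac:(lra)).
    rewrite (rp_split t p) in H at 2 by lra.
    assert (EG : gam c p (S n) = c * Rpower t p) by reflexivity.
    rewrite EG. pose proof (rp_pos t p).
    replace (c * (1 - p) * (sum_f_R0 (fun k : nat => / gam c p k) n + / (c * Rpower t p)))
      with (c * (1 - p) * sum_f_R0 (fun k : nat => / gam c p k) n + (1-p) * (t / Rpower t p) / t)
      by (field; lra).
    lra.
Qed.

Lemma F_incr p n : 0 < p < 1 -> Rpower (INR n + 1) (1-p) <= Rpower (INR (S n) + 1) (1-p).
Proof. intros. rewrite SINR1. apply Rle_Rpower_l. lra. pose proof (tpos n); lra. Qed.

Lemma Sg_bound c p n : 0 < c -> 0 < p < 1 ->
  Rabs (Sg c p n - Rpower (INR n + 1) (1 - p) / (c * (1 - p))) <= / (c * (1 - p)).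
Proof.
  intros hc hp.
  pose proof (Sg_up c p n hc hp). pose proof (Sg_low c p n hc hp). pose proof (F_incr p n hp).
  assert (hq : 0 < c * (1-p)) by nra.
  apply Rabs_le. split.
  - apply (Rmult_le_reg_l (c*(1-p))); auto.
    replace (c * (1 - p) * - / (c * (1 - p))) with (-1) by (field; lra).
    replace (c * (1 - p) * (Sg c p n - Rpower (INR n + 1) (1 - p) / (c * (1 - p))))
      with (c * (1 - p) * Sg c p n - Rpower (INR n + 1) (1 - p)) by (field; lra). lra.
  - apply (Rmult_le_reg_l (c*(1-p))); auto.
    replace (c * (1 - p) * / (c * (1 - p))) with 1 by (field; lra).
    replace (c * (1 - p) * (Sg c p n - Rpower (INR n + 1) (1 - p) / (c * (1 - p))))
      with (c * (1 - p) * Sg c p n - Rpower (INR n + 1) (1 - p)) by (field; lra). lra.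
Qed.

Lemma opair_eq g w n : opair g w n = (orthpoly g n w, orthpoly g (S n) w).
Proof.
  induction n.
  - reflexivity.
  - unfold orthpoly at 2. simpl opair at 2. rewrite IHn. simpl. unfold orthpoly at 1. simpl.
    rewrite IHn. reflexivity.
Qed.

Lemma x0 g w : orthpoly g 0 w = 1.
Proof. reflexivity. Qed.

Lemma xrec g w n : orthpoly g (S (S n)) w = (w * orthpoly g (S n) w - g n * orthpoly g n w) / g (S n).
Proof. unfold orthpoly at 1. simpl opair. rewrite opair_eq. reflexivity. Qed.

Lemma xrec2 g w n : 0 < g (S n) ->
  g (S n) * orthpoly g (S (S n)) w + g n * orthpoly g n w = w * orthpoly g (S n) w.
Proof. intro h. rewrite xrec. field. lra. Qed.

Lemma xnz g w n : (forall k, 0 < g k) ->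
  0 < orthpoly g n w ^ 2 + orthpoly g (S n) w ^ 2.
Proof.
  intro hg. induction n.
  - rewrite x0. pose proof (pow2_ge_0 (orthpoly g 1 w)). lra.
  - pose proof (xrec2 g w n (hg (S n))) as R.
    destruct (Rlt_or_le 0 (orthpoly g (S n) w ^ 2 + orthpoly g (S (S n)) w ^ 2)) as [h|h]; auto.
    exfalso.
    assert (orthpoly g (S n) w = 0) by nra.
    assert (orthpoly g (S (S n)) w = 0) by nra.
    rewrite H, H0 in R. assert (orthpoly g n w = 0).
    { specialize (hg n). nra. }
    rewrite H, H1 in IHn. lra.
Qed.

Definition KK (g : nat -> R) (w : R) (m : nat) :=
  let a := orthpoly g m w in let b := orthpoly g (S m) w in
  g m * (a^2 + b^2) - w * a * b + (g (S m) - g m) * b^2.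

Lemma KK_diff g w m : (forall k, 0 < g k) ->
  KK g w (S m) - KK g w m =
   ((g (S (S m)) - g (S m)) - (g (S m) - g m) - (g (S m) - g m)^2 / g m) * orthpoly g (S (S m)) w ^ 2
   + ((g (S m) - g m) * w / g m) * orthpoly g (S m) w * orthpoly g (S (S m)) w.
Proof.
  intro hg. pose proof (xrec2 g w m (hg (S m))) as R.
  pose proof (hg m) as h0.
  assert (E : orthpoly g m w = (w * orthpoly g (S m) w - g (S m) * orthpoly g (S (S m)) w) / g m)
    by (apply (Rmult_eq_reg_l (g m)); [field_simplify; lra | lra]).
  unfold KK. rewrite E. field. lra.
Qed.

Lemma Rdiv_le_0_compat a b : 0 <= a -> 0 < b -> 0 <= a / b.
Proof. intros; unfold Rdiv; apply Rmult_le_pos; [lra| left; apply Rinv_0_lt_compat; lra]. Qed.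

Lemma wbd_le (w M b d : R) : Rabs w <= M -> Rabs (w * b * d) <= M * (b^2 + d^2) / 2.
Proof.
  intro hw. rewrite !Rabs_mult.
  assert (Rabs b * Rabs d <= (b^2+d^2)/2).
  { pose proof (pow2_ge_0 (Rabs b - Rabs d)).
    replace (b^2) with (Rabs b ^2) by (rewrite RPow_abs; apply Rabs_pos_eq; apply pow2_ge_0).
    replace (d^2) with (Rabs d ^2) by (rewrite RPow_abs; apply Rabs_pos_eq; apply pow2_ge_0).
    nra. }
  pose proof (Rabs_pos w). pose proof (Rabs_pos b). pose proof (Rabs_pos d).
  assert (0 <= Rabs b * Rabs d) by nra.
  nra.
Qed.

Lemma kstep (g0 gm gm1 em em1 e0 M w b d Kn Kn1 : R) :
  0 < g0 -> g0 <= gm -> gm <= gm1 -> em = gm1 - gm -> 0 <= em1 -> em1 <= em -> em <= e0 ->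
  Rabs w <= M -> M <= gm1 -> 0 < b^2 + d^2 ->
  Kn1 = gm1 * (b^2 + d^2) - w * b * d + em1 * d^2 ->
  Kn1 - Kn = (em1 - em - em^2/gm) * d^2 + (em * w / gm) * b * d ->
  gm1 / 2 * (b^2+d^2) <= Kn1 /\
  Rabs (Kn1 - Kn) <= ((2*em/g0 + (2*e0+M)/gm) - (2*em1/g0 + (2*e0+M)/gm1)) * Kn1.
Proof.
  intros hg0 h1 h2 hem he1 he2 he3 hw hM hP hK hD.
  set (P := b^2 + d^2) in *.
  pose proof (wbd_le w M b d hw) as hwbd. fold P in hwbd.
  assert (hd2 : 0 <= d^2) by apply pow2_ge_0.
  assert (hdP : d^2 <= P) by (unfold P; pose proof (pow2_ge_0 b); lra).
  assert (hKlow : gm1 / 2 * P <= Kn1).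
  { rewrite hK. pose proof (Rle_abs (w*b*d)). nra. }
  split; auto.
  assert (hgm : 0 < gm) by lra.
  assert (hem0 : 0 <= em) by lra.
  set (C := (em - em1) + em * e0 / gm + em * M / (2 * gm)).
  assert (hC : Rabs (Kn1 - Kn) <= C * P).
  { rewrite hD.
    eapply Rle_trans. apply Rabs_triang.
    rewrite Rabs_mult.
    assert (A1 : Rabs (em1 - em - em ^ 2 / gm) <= (em - em1) + em * e0 / gm).
    { assert (0 <= em^2/gm) by (apply Rdiv_le_0_compat; [apply pow2_ge_0|lra]).
      assert (em^2/gm <= em*e0/gm) by (unfold Rdiv; apply Rmult_le_compat_r;
        [left; apply Rinv_0_lt_compat; lra| nra]).
      apply Rabs_le; lra. }
    replace (em * w / gm * b * d) with ((em/gm) * (w*b*d)) by (field; lra).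
    rewrite Rabs_mult.
    assert (0 <= em/gm) by (apply Rdiv_le_0_compat; lra).
    rewrite (Rabs_pos_eq (em/gm)) by auto.
    rewrite (Rabs_pos_eq (d^2)) by auto.
    assert (A2 : em / gm * Rabs (w*b*d) <= em / gm * (M * P / 2)) by (apply Rmult_le_compat_l; auto).
    assert (A3 : Rabs (em1 - em - em ^ 2 / gm) * d^2 <= ((em - em1) + em * e0 / gm) * P).
    { apply Rmult_le_compat; auto. apply Rabs_pos. }
    unfold C. replace ((em - em1 + em * e0 / gm + em * M / (2 * gm)) * P)
      with (((em - em1) + em * e0 / gm) * P + em/gm * (M*P/2)) by (field; lra).
    lra. }
  assert (hC0 : 0 <= C).
  { unfold C. assert (0 <= em*e0/gm) by (apply Rdiv_le_0_compat; nra).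
    assert (0 <= em*M/(2*gm)) by (apply Rdiv_le_0_compat; [ pose proof (Rabs_pos w); nra | lra]). lra. }
  assert (hPK : P <= 2 * Kn1 / gm1).
  { apply (Rmult_le_reg_l (gm1 / 2)). apply Rdiv_lt_0_compat; lra.
    replace (gm1 / 2 * (2 * Kn1 / gm1)) with Kn1 by (field; lra). lra. }
  assert (hK0 : 0 <= Kn1) by (assert (0 <= gm1/2*P) by (apply Rmult_le_pos; [apply Rdiv_le_0_compat|]; lra); lra).
  eapply Rle_trans. apply hC.
  eapply Rle_trans. apply Rmult_le_compat_l. apply hC0. apply hPK.
  replace (C * (2 * Kn1 / gm1)) with ((2 * C / gm1) * Kn1) by (field; lra).
  apply Rmult_le_compat_r; auto.
  unfold C.
  assert (E1 : 2 * (em - em1 + em * e0 / gm + em * M / (2 * gm)) / gm1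
     = 2 * (em - em1) / gm1 + (2*e0 + M) * (em / (gm * gm1))) by (field; lra).
  rewrite E1.
  assert (E2 : em / (gm * gm1) = /gm - /gm1) by (rewrite hem; field; lra).
  rewrite E2.
  assert (2 * (em - em1) / gm1 <= 2 * (em - em1) / g0).
  { unfold Rdiv. apply Rmult_le_compat_l. lra. apply Rinv_le_contravar; lra. }
  unfold Rdiv. unfold Rdiv in H. lra.
Qed.

Lemma abs_le_inv a b : Rabs a <= b -> -b <= a <= b.
Proof. intro h. pose proof (Rle_abs a). pose proof (Rle_abs (-a)). rewrite Rabs_Ropp in H0. lra. Qed.

Definition sw_hyp (K tau : nat -> R) (m0 : nat) :=
  (forall m, (m0 <= m)%nat -> 0 < K m) /\
  (forall m, (m0 <= m)%nat -> 0 <= tau (S m) <= tau m) /\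
  tau m0 <= /2 /\
  (forall m, (m0 <= m)%nat -> Rabs (K (S m) - K m) <= (tau m - tau (S m)) * K (S m)).

Lemma sw_tau (K tau : nat -> R) m0 : sw_hyp K tau m0 -> forall m, (m0 <= m)%nat -> 0 <= tau m <= /2.
Proof.
  intros [h1 [h2 [h3 h4]]] m hm. induction hm.
  - split; [|auto]. destruct (h2 m0 (le_n _)); lra.
  - destruct (h2 m hm). destruct IHhm. split; lra.
Qed.

Lemma sw_mono (K tau : nat -> R) m0 : sw_hyp K tau m0 -> forall i j, (m0 <= i)%nat -> (i <= j)%nat ->
  K i * (1 - tau i) <= K j * (1 - tau j) /\ K j / (1 - tau j) <= K i / (1 - tau i).
Proof.
  intros H i j hi hj. pose proof (sw_tau K tau m0 H) as ht.
  destruct H as [hK [h2 [h3 h4]]].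
  induction hj.
  - lra.
  - assert (hm : (m0 <= m)%nat) by lia.
    destruct IHhj as [A B].
    pose proof (h4 m hm) as D. apply abs_le_inv in D.
    pose proof (hK m hm). pose proof (hK (S m) ltac:(lia)).
    pose proof (ht m hm). pose proof (ht (S m) ltac:(lia)).
    set (t0 := tau m) in *. set (t1 := tau (S m)) in *.
    set (k0 := K m) in *. set (k1 := K (S m)) in *.
    assert (k0 * (1 - t0) <= k1 * (1 - t1)) by nra.
    assert (k1 / (1 - t1) <= k0 / (1 - t0)).
    { apply (Rmult_le_reg_l ((1-t0)*(1-t1))). nra.
      replace ((1 - t0) * (1 - t1) * (k1 / (1 - t1))) with ((1-t0)*k1) by (field; lra).
      replace ((1 - t0) * (1 - t1) * (k0 / (1 - t0))) with ((1-t1)*k0) by (field; lra).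
      nra. }
    split; lra.
Qed.

Lemma sw_bounds (K tau : nat -> R) m0 : sw_hyp K tau m0 -> forall i j, (m0 <= i)%nat -> (i <= j)%nat ->
  K m0 / 2 <= K j <= 2 * K m0 /\ Rabs (K j - K i) <= 4 * tau i * K m0.
Proof.
  intros H i j hi hj.
  pose proof (sw_tau K tau m0 H) as ht.
  pose proof (sw_mono K tau m0 H) as hm.
  destruct H as [hK _].
  destruct (hm m0 j (le_n _) ltac:(lia)) as [A1 B1].
  destruct (hm m0 i (le_n _) ltac:(lia)) as [A2 B2].
  destruct (hm i j hi hj) as [A3 B3].
  pose proof (ht m0 (le_n _)). pose proof (ht i hi). pose proof (ht j ltac:(lia)).
  pose proof (hK m0 (le_n _)). pose proof (hK i hi). pose proof (hK j ltac:(lia)).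
  assert (Kj_up : K j <= K m0 / (1 - tau m0)).
  { eapply Rle_trans; [|apply B1]. apply (Rmult_le_reg_l (1 - tau j)). lra.
    replace ((1 - tau j) * (K j / (1 - tau j))) with (K j) by (field; lra). nra. }
  assert (Ki_up : K i <= K m0 / (1 - tau m0)).
  { eapply Rle_trans; [|apply B2]. apply (Rmult_le_reg_l (1 - tau i)). lra.
    replace ((1 - tau i) * (K i / (1 - tau i))) with (K i) by (field; lra). nra. }
  assert (K m0 / (1 - tau m0) <= 2 * K m0).
  { apply (Rmult_le_reg_l (1 - tau m0)). lra.
    replace ((1 - tau m0) * (K m0 / (1 - tau m0))) with (K m0) by (field; lra). nra. }
  assert (Kj_up2 : K j <= K i / (1 - tau i)).
  { eapply Rle_trans; [|apply B3]. apply (Rmult_le_reg_l (1 - tau j)). lra.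
    replace ((1 - tau j) * (K j / (1 - tau j))) with (K j) by (field; lra). nra. }
  assert (K i / (1 - tau i) <= K i + 2 * tau i * K i).
  { apply (Rmult_le_reg_l (1 - tau i)). lra.
    replace ((1 - tau i) * (K i / (1 - tau i))) with (K i) by (field; lra).
    assert (0 <= tau i * (1 - 2 * tau i) * K i) by (apply Rmult_le_pos; [apply Rmult_le_pos|]; lra).
    nra. }
  split; [split|].
  - nra.
  - lra.
  - apply Rabs_le. split; nra.
Qed.

Lemma cv_bound (u : nat -> R) l i d : Un_cv u l -> (forall j, (i <= j)%nat -> Rabs (u j - u i) <= d) ->
  Rabs (l - u i) <= d.
Proof.
  intros hc hb. destruct (Rle_or_lt (Rabs (l - u i)) d) as [h|h]; auto.
  exfalso. destruct (hc (Rabs (l - u i) - d) ltac:(lra)) as [N HN].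
  specialize (HN (max N i) ltac:(lia)). specialize (hb (max N i) ltac:(lia)).
  unfold R_dist in HN.
  assert (Rabs (l - u i) <= Rabs (u (max N i) - l) + Rabs (u (max N i) - u i)).
  { replace (l - u i) with (-(u (max N i) - l) + (u (max N i) - u i)) by ring.
    eapply Rle_trans. apply Rabs_triang. rewrite Rabs_Ropp. lra. }
  lra.
Qed.

Lemma cv_ge (u : nat -> R) l i d : Un_cv u l -> (forall j, (i <= j)%nat -> d <= u j) -> d <= l.
Proof.
  intros hc hb. destruct (Rle_or_lt d l) as [h|h]; auto.
  exfalso. destruct (hc (d - l) ltac:(lra)) as [N HN].
  specialize (HN (max N i) ltac:(lia)). specialize (hb (max N i) ltac:(lia)).
  unfold R_dist in HN. apply Rabs_def2 in HN. lra.
Qed.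

Lemma sw_limit (K tau : nat -> R) m0 : sw_hyp K tau m0 ->
  (forall eps, 0 < eps -> exists N, forall n, (N <= n)%nat -> tau n < eps) ->
  exists k, Un_cv K k /\ K m0 / 2 <= k /\
    forall i, (m0 <= i)%nat -> Rabs (k - K i) <= 4 * tau i * K m0.
Proof.
  intros H ht.
  pose proof (sw_bounds K tau m0 H) as hb.
  assert (hK0 : 0 < K m0) by (destruct H as [h _]; apply h; lia).
  assert (C : Cauchy_crit K).
  { intros eps he.
    destruct (ht (eps / (8 * K m0))) as [N HN].
    { apply Rdiv_lt_0_compat; lra. }
    exists (max N m0). intros n m hn hm. unfold R_dist.
    set (i := max N m0).
    assert (ti : tau i < eps / (8 * K m0)) by (apply HN; lia).
    assert (4 * tau i * K m0 < eps / 2).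
    { apply (Rmult_lt_compat_r (4 * K m0)) in ti; [|lra].
      replace (eps / (8 * K m0) * (4 * K m0)) with (eps/2) in ti by (field; lra). lra. }
    destruct (hb i n ltac:(lia) ltac:(lia)) as [_ A].
    destruct (hb i m ltac:(lia) ltac:(lia)) as [_ B].
    replace (K n - K m) with ((K n - K i) - (K m - K i)) by ring.
    eapply Rle_lt_trans. apply Rabs_triang. rewrite Rabs_Ropp. lra. }
  destruct (R_complete K C) as [k hk].
  exists k. split; auto. split.
  - apply (cv_ge K k m0); auto. intros j hj. destruct (hb m0 j (le_n _) hj) as [[A _] _]; auto.
  - intros i hi. apply (cv_bound K k i); auto. intros j hj.
    destruct (hb i j hi hj); auto.
Qed.

Lemma xbound g M n : (forall k, 0 < g k) -> 0 <= M -> exists B, 0 <= B /\ forall w, Rabs w <= M ->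
  Rabs (orthpoly g n w) <= B /\ Rabs (orthpoly g (S n) w) <= B.
Proof.
  intros hg hM. induction n.
  - exists (1 + M / g O). pose proof (hg O).
    assert (0 <= M / g O) by (apply Rdiv_le_0_compat; auto). split; [lra|].
    intros w hw. rewrite x0. rewrite Rabs_R1. split; [lra|].
    unfold orthpoly; simpl. unfold Rdiv. rewrite Rabs_mult, (Rabs_pos_eq (/ g O)).
    2: left; apply Rinv_0_lt_compat; auto.
    assert (Rabs w * / g O <= M * / g O) by (apply Rmult_le_compat_r; [left; apply Rinv_0_lt_compat|]; auto).
    unfold Rdiv in H0. lra.
  - destruct IHn as [B [hB HB]].
    pose proof (hg n). pose proof (hg (S n)).
    exists (B + (M * B + g n * B) / g (S n)).
    assert (0 <= (M * B + g n * B) / g (S n)) by (apply Rdiv_le_0_compat; nra).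
    split; [lra|]. intros w hw. destruct (HB w hw) as [A1 A2].
    split; [lra|]. rewrite xrec.
    unfold Rdiv. rewrite Rabs_mult, (Rabs_pos_eq (/ g (S n))).
    2: left; apply Rinv_0_lt_compat; auto.
    apply Rle_trans with ((M * B + g n * B) * / g (S n)); [|unfold Rdiv in H1; lra].
    apply Rmult_le_compat_r. left; apply Rinv_0_lt_compat; auto.
    eapply Rle_trans. apply Rabs_triang. rewrite Rabs_Ropp, !Rabs_mult, (Rabs_pos_eq (g n)) by lra.
    pose proof (Rabs_pos w). pose proof (Rabs_pos (orthpoly g n w)). pose proof (Rabs_pos (orthpoly g (S n) w)).
    apply Rplus_le_compat. apply Rmult_le_compat; auto. apply Rmult_le_compat_l; lra.
Qed.

Lemma sum_ubound (f : nat -> R -> R) M :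
  (forall j, exists B, forall w, Rabs w <= M -> Rabs (f j w) <= B) ->
  forall n, exists B, forall w, Rabs w <= M -> Rabs (sum_f_R0 (fun j => f j w) n) <= B.
Proof.
  intros hf n. induction n.
  - simpl. apply hf.
  - destruct IHn as [B HB]. destruct (hf (S n)) as [B' HB'].
    exists (B + B'). intros w hw. simpl. eapply Rle_trans. apply Rabs_triang.
    specialize (HB w hw). specialize (HB' w hw). lra.
Qed.

Lemma sum_split_le (a b : nat -> R) J : (forall j, (J < j)%nat -> a j <= b j) -> (forall j, 0 <= b j) ->
  forall n, (J <= n)%nat -> sum_f_R0 a n <= sum_f_R0 a J + sum_f_R0 b n.
Proof.
  intros hab hb n hn. induction hn.
  - assert (0 <= sum_f_R0 b J) by (apply cond_pos_sum; auto). lra.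
  - simpl. specialize (hab (S m) ltac:(lia)). specialize (hb (S m)). lra.
Qed.

Lemma Tsum g w n : sum_f_R0 (fun j => orthpoly g j w ^ 2 + orthpoly g (S j) w ^ 2) n
  = 2 * sqsum g n w - 1 + orthpoly g (S n) w ^ 2.
Proof.
  unfold sqsum. induction n.
  - simpl. rewrite x0. ring.
  - rewrite !tech5. rewrite IHn. ring.
Qed.

Lemma KK_low g w m : (forall k, 0 < g k) -> g m <= g (S m) -> Rabs w <= g m ->
  g m / 2 * (orthpoly g m w ^ 2 + orthpoly g (S m) w ^ 2) <= KK g w m.
Proof.
  intros hg hgm hw. unfold KK.
  pose proof (wbd_le w (g m) (orthpoly g m w) (orthpoly g (S m) w) hw).
  pose proof (Rle_abs (w * orthpoly g m w * orthpoly g (S m) w)).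
  pose proof (pow2_ge_0 (orthpoly g (S m) w)).
  assert (0 <= (g (S m) - g m) * orthpoly g (S m) w ^ 2) by (apply Rmult_le_pos; lra).
  lra.
Qed.

Lemma KK_P g w m E : (forall k, 0 < g k) -> 0 <= g (S m) - g m <= E -> Rabs w <= 2 * E ->
  Rabs (g m * (orthpoly g m w ^ 2 + orthpoly g (S m) w ^ 2) - KK g w m)
   <= 2 * E * (orthpoly g m w ^ 2 + orthpoly g (S m) w ^ 2).
Proof.
  intros hg he hw. unfold KK.
  set (a := orthpoly g m w). set (b := orthpoly g (S m) w).
  replace (g m * (a ^ 2 + b ^ 2) - (g m * (a ^ 2 + b ^ 2) - w * a * b + (g (S m) - g m) * b ^ 2))
    with (w * a * b - (g (S m) - g m) * b^2) by ring.
  eapply Rle_trans. apply Rabs_triang. rewrite Rabs_Ropp.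
  pose proof (wbd_le w (2*E) a b hw).
  rewrite (Rabs_mult (g (S m) - g m)), (Rabs_pos_eq (b^2)) by apply pow2_ge_0.
  rewrite (Rabs_pos_eq (g (S m) - g m)) by lra.
  pose proof (pow2_ge_0 a). pose proof (pow2_ge_0 b).
  assert ((g (S m) - g m) * b^2 <= E * (a^2+b^2)) by nra.
  lra.
Qed.

Definition tauM c p M m := 2 * ee c p m / gam c p O + (2 * ee c p O + M) / gam c p m.

Lemma ee_le0 c p m : 0 < c -> 0 < p < 1 -> ee c p m <= ee c p O.
Proof. intros hc hp. induction m; [lra|]. pose proof (ee_decr c p m hc hp). lra. Qed.

Lemma gam_ge0 c p m : 0 < c -> 0 < p -> gam c p O <= gam c p m.
Proof. intros. apply gam_mono; auto; [lra|lia]. Qed.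

Lemma inv_small r eps : 0 < r -> 0 < eps -> exists N, forall n, (N <= n)%nat -> / Rpower (INR n + 1) r < eps.
Proof.
  intros hr he. destruct (rp_large r (2/eps) hr) as [N HN]. exists N. intros n hn.
  specialize (HN n hn). pose proof (rp_pos (INR n + 1) r).
  assert (0 < 2/eps) by (apply Rdiv_lt_0_compat; lra).
  apply (Rmult_lt_reg_l (Rpower (INR n + 1) r)); auto.
  rewrite Rinv_r by lra.
  apply Rlt_le_trans with (2/eps * eps). field_simplify; lra.
  apply Rmult_le_compat_r; lra.
Qed.

Lemma invgam_small c p eps : 0 < c -> 0 < p -> 0 < eps -> exists N, forall n, (N <= n)%nat -> / gam c p n < eps.
Proof.
  intros hc hp he. destruct (inv_small p (c*eps) hp) as [N HN]. nra.
  exists N. intros n hn. specialize (HN n hn). unfold gam.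
  pose proof (rp_pos (INR n + 1) p).
  rewrite Rinv_mult.
  apply (Rmult_lt_reg_l c); auto. rewrite <- Rmult_assoc, Rinv_r, Rmult_1_l by lra. lra.
Qed.

Lemma ee_to0 c p eps : 0 < c -> 0 < p < 1 -> 0 < eps -> exists N, forall n, (N <= n)%nat -> ee c p n < eps.
Proof.
  intros hc hp he. destruct (inv_small (1-p) (eps / (c*p)) ltac:(lra)) as [N HN].
  apply Rdiv_lt_0_compat; nra.
  exists N. intros n hn. specialize (HN n hn). pose proof (ee_small c p n hc hp).
  unfold Rdiv in H at 1. 
  assert (c * p * / Rpower (INR n + 1) (1 - p) < c * p * (eps / (c * p))) by (apply Rmult_lt_compat_l; nra).
  replace (c * p * (eps / (c * p))) with eps in H0 by (field; nra). lra.
Qed.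

Lemma tau_nonneg c p M m : 0 < c -> 0 < p < 1 -> 0 <= M -> 0 <= tauM c p M m.
Proof.
  intros. unfold tauM. pose proof (ee_nonneg c p m H ltac:(lra)). pose proof (ee_nonneg c p O H ltac:(lra)).
  pose proof (gam_pos c p O H). pose proof (gam_pos c p m H).
  assert (0 <= 2 * ee c p m / gam c p O) by (apply Rdiv_le_0_compat; lra).
  assert (0 <= (2 * ee c p O + M) / gam c p m) by (apply Rdiv_le_0_compat; lra). lra.
Qed.

Lemma tau_decr c p M m : 0 < c -> 0 < p < 1 -> 0 <= M -> tauM c p M (S m) <= tauM c p M m.
Proof.
  intros hc hp hM. unfold tauM. pose proof (ee_decr c p m hc hp).
  pose proof (ee_nonneg c p O hc ltac:(lra)).
  pose proof (gam_pos c p O hc). pose proof (gam_pos c p m hc). pose proof (gam_incr c p m hc ltac:(lra)).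
  assert (2 * ee c p (S m) / gam c p O <= 2 * ee c p m / gam c p O).
  { unfold Rdiv; apply Rmult_le_compat_r; [left; apply Rinv_0_lt_compat|]; lra. }
  assert ((2 * ee c p O + M) / gam c p (S m) <= (2 * ee c p O + M) / gam c p m).
  { unfold Rdiv; apply Rmult_le_compat_l; [lra|]. apply Rinv_le_contravar; lra. }
  lra.
Qed.

Lemma tau_to0 c p M eps : 0 < c -> 0 < p < 1 -> 0 <= M -> 0 < eps ->
  exists N, forall n, (N <= n)%nat -> tauM c p M n < eps.
Proof.
  intros hc hp hM he.
  pose proof (gam_pos c p O hc). pose proof (ee_nonneg c p O hc ltac:(lra)).
  destruct (ee_to0 c p (eps * gam c p O / 4) hc hp) as [N1 H1].
  { apply Rdiv_lt_0_compat; nra. }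
  destruct (invgam_small c p (eps / (2 * (2 * ee c p O + M + 1))) hc ltac:(lra)) as [N2 H2].
  { apply Rdiv_lt_0_compat; lra. }
  exists (max N1 N2). intros n hn. specialize (H1 n ltac:(lia)). specialize (H2 n ltac:(lia)).
  unfold tauM.
  pose proof (gam_pos c p n hc).
  assert (2 * ee c p n / gam c p O < eps / 2).
  { apply (Rmult_lt_reg_l (gam c p O)); auto. field_simplify; lra. }
  assert ((2 * ee c p O + M) / gam c p n <= eps / 2).
  { unfold Rdiv. rewrite Rmult_comm.
    assert (/ gam c p n * (2 * ee c p O + M) <= eps / (2 * (2 * ee c p O + M + 1)) * (2 * ee c p O + M))
      by (apply Rmult_le_compat_r; lra).
    assert (eps / (2 * (2 * ee c p O + M + 1)) * (2 * ee c p O + M) <= eps / 2).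
    { apply (Rmult_le_reg_l (2 * (2 * ee c p O + M + 1))). lra.
      field_simplify; try lra; nra. }
    unfold Rdiv in *. lra. }
  lra.
Qed.

Lemma m0_exists c p M : 0 < c -> 0 < p < 1 -> 0 <= M ->
  exists m0, M <= gam c p m0 /\ tauM c p M m0 <= /2.
Proof.
  intros hc hp hM.
  destruct (gam_large c p M hc ltac:(lra)) as [N1 H1].
  destruct (tau_to0 c p M (/2) hc hp hM ltac:(lra)) as [N2 H2].
  exists (max N1 N2). split. apply H1; lia. left; apply H2; lia.
Qed.

Lemma sw_ok c p M m0 w : 0 < c -> 0 < p < 1 -> 0 <= M -> M <= gam c p m0 -> tauM c p M m0 <= /2 ->
  Rabs w <= M -> sw_hyp (KK (gam c p) w) (tauM c p M) m0.
Proof.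
  intros hc hp hM hg ht hw.
  assert (hgp : forall k, 0 < gam c p k) by (intro; apply gam_pos; auto).
  assert (hgm : forall m, (m0 <= m)%nat -> M <= gam c p m).
  { intros m hm. eapply Rle_trans. apply hg. apply gam_mono; auto; lra. }
  split; [|split; [|split]].
  - intros m hm. eapply Rlt_le_trans; [|apply KK_low]; auto.
    + pose proof (xnz (gam c p) w m hgp). pose proof (gam_pos c p m hc). apply Rmult_lt_0_compat; auto. lra.
    + apply gam_incr; auto; lra.
    + specialize (hgm m hm); lra.
  - intros m hm. split. apply tau_nonneg; auto. apply tau_decr; auto.
  - auto.
  - intros m hm.
    assert (Hs := kstep (gam c p O) (gam c p m) (gam c p (S m)) (ee c p m) (ee c p (S m)) (ee c p O) M w
      (orthpoly (gam c p) (S m) w) (orthpoly (gam c p) (S (S m)) w) (KK (gam c p) w m) (KK (gam c p) w (S m))).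
    destruct Hs as [_ Hs].
    + apply gam_pos; auto.
    + apply gam_ge0; lra.
    + apply gam_incr; lra.
    + reflexivity.
    + apply ee_nonneg; lra.
    + apply ee_decr; auto.
    + apply ee_le0; auto.
    + auto.
    + apply hgm; lia.
    + apply xnz; auto.
    + unfold KK, ee. reflexivity.
    + rewrite KK_diff by auto. unfold ee. ring.
    + unfold tauM. apply Hs.
Qed.

Lemma F_ge1 p n : 0 < p < 1 -> 1 <= Rpower (INR n + 1) (1 - p).
Proof.
  intros hp. replace 1 with (Rpower 1 (1-p)) at 1.
  - apply Rle_Rpower_l. lra. pose proof (tpos n); lra.
  - unfold Rpower; rewrite ln_1, Rmult_0_r, exp_0; auto.
Qed.

Lemma cesaro c p (rho : nat -> R) : 0 < c -> 0 < p < 1 -> (forall j, 0 <= rho j) ->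
  (forall eps, 0 < eps -> exists N, forall n, (N <= n)%nat -> rho n < eps) ->
  forall eps, 0 < eps -> exists N, forall n, (N <= n)%nat ->
    sum_f_R0 (fun j => rho j / gam c p j) n <= eps * Rpower (INR n + 1) (1 - p).
Proof.
  intros hc hp hr hcv eps he.
  assert (hq : 0 < c * (1 - p)) by nra.
  destruct (hcv (eps * (c * (1-p)) / 4)) as [J HJ].
  { apply Rdiv_lt_0_compat; nra. }
  set (RJ := sum_f_R0 (fun j => rho j / gam c p j) J).
  assert (hRJ : 0 <= RJ).
  { apply cond_pos_sum. intro j. apply Rdiv_le_0_compat; auto. apply gam_pos; auto. }
  destruct (rp_large (1-p) (2 * RJ / eps) ltac:(lra)) as [N2 HN2].
  exists (max J N2). intros n hn.
  set (F := Rpower (INR n + 1) (1 - p)).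
  assert (hF1 : 1 <= F) by apply F_ge1, hp.
  assert (hsplit := sum_split_le (fun j => rho j / gam c p j)
     (fun j => / gam c p j * (eps * (c * (1-p)) / 4)) J).
  assert (A : sum_f_R0 (fun j => rho j / gam c p j) n <= RJ + Sg c p n * (eps * (c * (1-p)) / 4)).
  { unfold RJ, Sg.
    replace (sum_f_R0 (fun k => / gam c p k) n * (eps * (c * (1 - p)) / 4))
      with (sum_f_R0 (fun j => / gam c p j * (eps * (c * (1 - p)) / 4)) n)
      by (rewrite <- scal_sum; ring).
    apply hsplit; [| |lia].
    - intros j hj. specialize (HJ j ltac:(lia)). pose proof (gam_pos c p j hc).
      unfold Rdiv. rewrite (Rmult_comm (rho j)). apply Rmult_le_compat_l.
      left; apply Rinv_0_lt_compat; auto. lra.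
    - intro j. apply Rmult_le_pos. left; apply Rinv_0_lt_compat, gam_pos; auto.
      left; apply Rdiv_lt_0_compat; nra. }
  pose proof (Sg_bound c p n hc hp) as SB. apply abs_le_inv in SB.
  fold F in SB.
  assert (Sg c p n <= 2 * F / (c * (1 - p))).
  { assert (Sg c p n <= F / (c * (1 - p)) + / (c * (1 - p))) by lra.
    unfold Rdiv in *. assert (/ (c * (1 - p)) <= F * / (c * (1-p))).
    { rewrite <- (Rmult_1_l (/ (c * (1 - p)))) at 1. apply Rmult_le_compat_r; auto.
      left; apply Rinv_0_lt_compat; auto. }
    lra. }
  assert (Sg c p n * (eps * (c * (1 - p)) / 4) <= eps * F / 2).
  { apply Rle_trans with (2 * F / (c * (1 - p)) * (eps * (c * (1 - p)) / 4)).
    apply Rmult_le_compat_r; auto. left; apply Rdiv_lt_0_compat; nra.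
    right; field; lra. }
  assert (RJ <= eps * F / 2).
  { specialize (HN2 n ltac:(lia)). fold F in HN2.
    apply (Rmult_le_compat_r (eps/2)) in HN2; [|lra].
    replace (2 * RJ / eps * (eps / 2)) with RJ in HN2 by (field; lra). lra. }
  lra.
Qed.

Lemma K0_bound c p M m0 : 0 < c -> 0 < p < 1 -> 0 <= M ->
  exists B0, 0 <= B0 /\ forall w, Rabs w <= M -> KK (gam c p) w m0 <= B0.
Proof.
  intros hc hp hM.
  assert (hgp : forall k, 0 < gam c p k) by (intro; apply gam_pos; auto).
  destruct (xbound (gam c p) M m0 hgp hM) as [B [hB HB]].
  pose proof (gam_pos c p m0 hc). pose proof (ee_nonneg c p m0 hc ltac:(lra)).
  exists (gam c p m0 * (2 * B^2) + M * B^2 + ee c p m0 * B^2).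
  split. { assert (0 <= B^2) by apply pow2_ge_0. nra. }
  intros w hw. destruct (HB w hw) as [A1 A2].
  pose proof (pow_maj_Rabs _ _ 2 A1). pose proof (pow_maj_Rabs _ _ 2 A2).
  pose proof (wbd_le w M (orthpoly (gam c p) m0 w) (orthpoly (gam c p) (S m0) w) hw).
  pose proof (Rle_abs (- (w * orthpoly (gam c p) m0 w * orthpoly (gam c p) (S m0) w))).
  rewrite Rabs_Ropp in H4.
  unfold KK. fold (ee c p m0).
  set (a := orthpoly (gam c p) m0 w) in *. set (b := orthpoly (gam c p) (S m0) w) in *.
  assert (gam c p m0 * (a ^ 2 + b ^ 2) <= gam c p m0 * (2 * B^2)) by (apply Rmult_le_compat_l; lra).
  assert (ee c p m0 * b^2 <= ee c p m0 * B^2) by (apply Rmult_le_compat_l; lra).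
  assert (M * (a ^ 2 + b ^ 2) / 2 <= M * B^2) by (unfold Rdiv; nra).
  lra.
Qed.

Lemma Dsum c p w k n :
  sum_f_R0 (fun j => (orthpoly (gam c p) j w ^ 2 + orthpoly (gam c p) (S j) w ^ 2) - k / gam c p j) n
  = (2 * sqsum (gam c p) n w - 1 + orthpoly (gam c p) (S n) w ^ 2) - k * Sg c p n.
Proof.
  rewrite minus_sum, Tsum. f_equal. unfold Sg. rewrite scal_sum. apply sum_eq. intros; unfold Rdiv; ring.
Qed.

Lemma Dprop (f rho : nat -> R) m0 : (forall j, (m0 < j)%nat -> Rabs (f j) <= rho j) -> (forall j, 0 <= rho j) ->
  forall n, (m0 <= n)%nat -> Rabs (sum_f_R0 f n) <= Rabs (sum_f_R0 f m0) + sum_f_R0 rho n.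
Proof.
  intros hf hr n hn. induction hn.
  - assert (0 <= sum_f_R0 rho m0) by (apply cond_pos_sum; auto). lra.
  - rewrite !tech5. eapply Rle_trans. apply Rabs_triang. specialize (hf (S m) ltac:(lia)). lra.
Qed.

Lemma K_lim c p w : 0 < c -> 0 < p < 1 -> exists k, Un_cv (KK (gam c p) w) k.
Proof.
  intros hc hp. pose proof (Rabs_pos w).
  destruct (m0_exists c p (Rabs w) hc hp H) as [m0 [h1 h2]].
  pose proof (sw_ok c p (Rabs w) m0 w hc hp H h1 h2 (Rle_refl _)) as Hs.
  destruct (sw_limit _ _ _ Hs) as [k [hk _]].
  { intros. apply tau_to0; auto. }
  eauto.
Qed.

Lemma Kinfo c p M m0 w k : 0 < c -> 0 < p < 1 -> 0 <= M -> M <= gam c p m0 -> tauM c p M m0 <= /2 ->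
  Rabs w <= M -> Un_cv (KK (gam c p) w) k ->
  0 < KK (gam c p) w m0 /\ KK (gam c p) w m0 / 2 <= k /\
  (forall i, (m0 <= i)%nat -> Rabs (k - KK (gam c p) w i) <= 4 * tauM c p M i * KK (gam c p) w m0) /\
  (forall j, (m0 <= j)%nat -> KK (gam c p) w j <= 2 * KK (gam c p) w m0).
Proof.
  intros hc hp hM h1 h2 hw hk.
  pose proof (sw_ok c p M m0 w hc hp hM h1 h2 hw) as Hs.
  destruct (sw_limit _ _ _ Hs) as [k' [hk' [A B]]].
  { intros. apply tau_to0; auto. }
  rewrite (UL_sequence _ _ _ hk hk').
  split; [destruct Hs as [HH _]; apply HH; lia|].
  split; auto. split; auto.
  intros j hj. destruct (sw_bounds _ _ _ Hs m0 j (le_n _) hj) as [[_ C] _]. auto.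
Qed.

Lemma main_unif c p (kf : R -> R) : 0 < c -> 0 < p < 1 -> (forall w, Un_cv (KK (gam c p) w) (kf w)) ->
  forall M, 0 <= M -> forall eps, 0 < eps -> exists N, forall n, (N <= n)%nat -> forall w, Rabs w <= M ->
  Rabs (sqsum (gam c p) n w / Rpower (INR n + 1) (1 - p) - kf w / (2 * c * (1 - p))) < eps.
Proof.
  intros hc hp hkf M hM eps he.
  assert (hgp : forall k, 0 < (gam c p) k) by (intro; apply gam_pos; auto).
  destruct (m0_exists c p M hc hp hM) as [m0 [hm1 hm2]].
  destruct (K0_bound c p M m0 hc hp hM) as [B0 [hB0 HB0]].
  assert (hq : 0 < c * (1 - p)) by nra.
  set (E := ee c p O + M).
  assert (hE : 0 <= E) by (pose proof (ee_nonneg c p O hc ltac:(lra)); unfold E; lra).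
  set (rho := fun j => 8 * E * B0 / (gam c p) j + 4 * B0 * tauM c p M j).
  assert (hrho : forall j, 0 <= rho j).
  { intro j. unfold rho. pose proof (tau_nonneg c p M j hc hp hM).
    assert (0 <= 8 * E * B0 / (gam c p) j) by (apply Rdiv_le_0_compat; auto; nra). nra. }
  assert (INFO : forall w, Rabs w <= M ->
     0 < kf w /\ kf w <= 3 * B0 /\
     (forall j, (m0 <= j)%nat -> Rabs ((orthpoly (gam c p) j w ^ 2 + orthpoly (gam c p) (S j) w ^ 2) - kf w / (gam c p) j) <= rho j / (gam c p) j) /\
     (forall j, (m0 <= j)%nat -> orthpoly (gam c p) j w ^ 2 + orthpoly (gam c p) (S j) w ^ 2 <= 4 * B0 / (gam c p) j)).
  { intros w hw.
    destruct (Kinfo c p M m0 w (kf w) hc hp hM hm1 hm2 hw (hkf w)) as [I0 [I1 [I2 I3]]].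
    pose proof (HB0 w hw) as hb.
    pose proof (I2 m0 (le_n _)) as I2'. apply abs_le_inv in I2'.
    assert (hPj : forall j, (m0 <= j)%nat -> orthpoly (gam c p) j w ^ 2 + orthpoly (gam c p) (S j) w ^ 2 <= 4 * B0 / (gam c p) j).
    { intros j hj.
      assert (hgj : M <= (gam c p) j) by (eapply Rle_trans; [apply hm1| apply gam_mono; auto; lra]).
      pose proof (KK_low (gam c p) w j hgp (gam_incr c p j hc ltac:(lra)) ltac:(lra)).
      specialize (I3 j hj). pose proof (hgp j).
      apply (Rmult_le_reg_l ((gam c p) j / 2)). apply Rdiv_lt_0_compat; lra.
      replace ((gam c p) j / 2 * (4 * B0 / (gam c p) j)) with (2 * B0) by (field; lra). lra. }
    split; [lra|]. split.
    { pose proof (tau_nonneg c p M m0 hc hp hM). nra. }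
    split; auto.
    intros j hj. pose proof (hgp j) as hg. specialize (hPj j hj).
    assert (hgj : M <= (gam c p) j) by (eapply Rle_trans; [apply hm1| apply gam_mono; auto; lra]).
    set (P := orthpoly (gam c p) j w ^ 2 + orthpoly (gam c p) (S j) w ^ 2) in *.
    assert (hP0 : 0 <= P) by (unfold P; pose proof (pow2_ge_0 (orthpoly (gam c p) j w)); pose proof (pow2_ge_0 (orthpoly (gam c p) (S j) w)); lra).
    assert (K1 := KK_P (gam c p) w j E hgp).
    fold P in K1.
    specialize (K1 ltac:(split; [apply (ee_nonneg c p j hc); lra| change (gam c p (S j) - gam c p j) with (ee c p j); unfold E; pose proof (ee_le0 c p j hc hp); lra])
      ltac:(unfold E; pose proof (ee_nonneg c p O hc ltac:(lra)); lra)).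
    specialize (I2 j hj).
    assert (Rabs ((gam c p) j * P - kf w) <= rho j).
    { replace ((gam c p) j * P - kf w) with (((gam c p) j * P - KK (gam c p) w j) - (kf w - KK (gam c p) w j)) by ring.
      eapply Rle_trans. apply Rabs_triang. rewrite Rabs_Ropp.
      unfold rho.
      assert (2 * E * P <= 8 * E * B0 / (gam c p) j).
      { replace (8 * E * B0 / (gam c p) j) with (2 * E * (4 * B0 / (gam c p) j)) by (field; lra). apply Rmult_le_compat_l; lra. }
      assert (4 * tauM c p M j * KK (gam c p) w m0 <= 4 * B0 * tauM c p M j).
      { pose proof (tau_nonneg c p M j hc hp hM). nra. }
      lra. }
    replace (P - kf w / (gam c p) j) with (((gam c p) j * P - kf w) / (gam c p) j) by (field; lra).
    unfold Rdiv. rewrite Rabs_mult, (Rabs_pos_eq (/ (gam c p) j)) by (left; apply Rinv_0_lt_compat; auto).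
    apply Rmult_le_compat_r; auto. left; apply Rinv_0_lt_compat; auto. }
  assert (hB1 : exists B1, forall w, Rabs w <= M ->
     Rabs (sum_f_R0 (fun j => (orthpoly (gam c p) j w ^ 2 + orthpoly (gam c p) (S j) w ^ 2) - kf w / (gam c p) j) m0) <= B1).
  { apply (sum_ubound (fun j w => (orthpoly (gam c p) j w ^ 2 + orthpoly (gam c p) (S j) w ^ 2) - kf w / (gam c p) j)).
    intro j. destruct (xbound (gam c p) M j hgp hM) as [B [hB HB]].
    exists (2 * B^2 + 3 * B0 / (gam c p) O). intros w hw.
    destruct (HB w hw) as [A1 A2]. destruct (INFO w hw) as [J1 [J2 _]].
    pose proof (pow_maj_Rabs _ _ 2 A1). pose proof (pow_maj_Rabs _ _ 2 A2).
    pose proof (pow2_ge_0 (orthpoly (gam c p) j w)). pose proof (pow2_ge_0 (orthpoly (gam c p) (S j) w)).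
    pose proof (hgp j). pose proof (hgp O). pose proof (gam_ge0 c p j hc ltac:(lra)). assert (0 <= kf w / (gam c p) j <= 3 * B0 / (gam c p) O).
    { split. apply Rdiv_le_0_compat; lra.
      unfold Rdiv. apply Rmult_le_compat; try lra. left; apply Rinv_0_lt_compat; lra.
      apply Rinv_le_contravar; lra. }
    eapply Rle_trans. apply Rabs_triang. rewrite Rabs_Ropp.
    rewrite (Rabs_pos_eq (kf w / (gam c p) j)) by lra.
    rewrite Rabs_pos_eq by lra. lra. }
  destruct hB1 as [B1 HB1].
  set (C := 3 * B0 / (c * (1-p)) + Rabs B1 + 1 + 4 * B0 / (gam c p) O).
  assert (hC : 0 <= C).
  { unfold C. pose proof (Rabs_pos B1). pose proof (hgp O).
    assert (0 <= 3 * B0 / (c * (1-p))) by (apply Rdiv_le_0_compat; lra).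
    assert (0 <= 4 * B0 / (gam c p) O) by (apply Rdiv_le_0_compat; lra). lra. }
  assert (hrho0 : forall e, 0 < e -> exists N, forall n, (N <= n)%nat -> rho n < e).
  { intros e he0.
    destruct (invgam_small c p (e / (2 * (8 * E * B0 + 1))) hc ltac:(lra)) as [N1 H1].
    { apply Rdiv_lt_0_compat; nra. }
    destruct (tau_to0 c p M (e / (2 * (4 * B0 + 1))) hc hp hM) as [N2 H2].
    { apply Rdiv_lt_0_compat; nra. }
    exists (max N1 N2). intros n hn. specialize (H1 n ltac:(lia)). specialize (H2 n ltac:(lia)).
    unfold rho. pose proof (tau_nonneg c p M n hc hp hM). pose proof (hgp n).
    assert (A : 8 * E * B0 / (gam c p) n <= e/2).
    { unfold Rdiv at 1. apply Rle_trans with ((8*E*B0+1) * / (gam c p) n).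
      apply Rmult_le_compat_r; [left; apply Rinv_0_lt_compat; lra| lra].
      apply Rle_trans with ((8*E*B0+1) * (e / (2 * (8 * E * B0 + 1)))).
      apply Rmult_le_compat_l; nra. right; field; nra. }
    assert (B : 4 * B0 * tauM c p M n < e/2).
    { apply Rle_lt_trans with ((4*B0+1) * tauM c p M n). nra.
      apply Rlt_le_trans with ((4*B0+1) * (e / (2 * (4 * B0 + 1)))).
      apply Rmult_lt_compat_l; nra. right; field; nra. }
    lra. }
  destruct (cesaro c p rho hc hp hrho hrho0 eps he) as [N1 HN1].
  destruct (rp_large (1-p) (2 * C / eps + 1) ltac:(lra)) as [N2 HN2].
  exists (max m0 (max N1 N2)). intros n hn w hw.
  destruct (INFO w hw) as [J1 [J2 [J3 J4]]].
  set (F := Rpower (INR n + 1) (1 - p)).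
  assert (hF : 2 * C / eps + 1 <= F) by (apply HN2; lia).
  assert (hCF : C < eps * F / 2).
  { assert (2 * C / eps < F) by lra.
    apply (Rmult_lt_compat_r (eps/2)) in H; [|lra].
    replace (2 * C / eps * (eps / 2)) with C in H by (field; lra). lra. }
  set (R := sum_f_R0 (fun j => rho j / (gam c p) j) n).
  assert (hR : R <= eps * F) by (apply HN1; lia).
  pose proof (Dprop (fun j => (orthpoly (gam c p) j w ^ 2 + orthpoly (gam c p) (S j) w ^ 2) - kf w / (gam c p) j)
     (fun j => rho j / (gam c p) j) m0) as DP.
  specialize (DP ltac:(intros j hj; apply J3; lia)).
  specialize (DP ltac:(intro j; apply Rdiv_le_0_compat; auto)).
  specialize (DP n ltac:(lia)). fold R in DP.
  pose proof (Dsum c p w (kf w) n) as DS. rewrite DS in DP.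
  specialize (HB1 w hw). pose proof (Rle_abs B1).
  assert (hx : orthpoly (gam c p) (S n) w ^ 2 <= 4 * B0 / (gam c p) O).
  { specialize (J4 n ltac:(lia)). pose proof (pow2_ge_0 (orthpoly (gam c p) n w)).
    pose proof (hgp O). pose proof (hgp n). pose proof (gam_ge0 c p n hc ltac:(lra)). assert (4 * B0 / (gam c p) n <= 4 * B0 / (gam c p) O).
    { unfold Rdiv. apply Rmult_le_compat_l. lra. apply Rinv_le_contravar; lra. }
    lra. }
  pose proof (pow2_ge_0 (orthpoly (gam c p) (S n) w)).
  pose proof (Sg_bound c p n hc hp) as SB. fold F in SB.
  assert (hk : Rabs (kf w * (Sg c p n - F / (c * (1 - p)))) <= 3 * B0 / (c * (1 - p))).
  { rewrite Rabs_mult, Rabs_pos_eq by lra.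
    apply Rle_trans with (3 * B0 * / (c * (1 - p))). apply Rmult_le_compat; auto; try lra. apply Rabs_pos.
    right; reflexivity. }
  set (SS := sqsum (gam c p) n w) in *.
  assert (hX : Rabs (2 * SS - kf w * F / (c * (1 - p))) <= C + R).
  { replace (2 * SS - kf w * F / (c * (1 - p))) with
      ((2 * SS - 1 + orthpoly (gam c p) (S n) w ^ 2 - kf w * Sg c p n) + 1 - orthpoly (gam c p) (S n) w ^ 2
        + kf w * (Sg c p n - F / (c * (1 - p)))) by (field; lra).
    eapply Rle_trans. apply Rabs_triang.
    eapply Rle_trans. apply Rplus_le_compat_r. apply Rabs_triang.
    eapply Rle_trans. apply Rplus_le_compat_r. apply Rplus_le_compat_r. apply Rabs_triang.
    rewrite Rabs_R1, Rabs_Ropp, (Rabs_pos_eq (orthpoly (gam c p) (S n) w ^ 2)) by lra.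
    unfold C. lra. }
  pose proof (F_ge1 p n hp) as hF1. fold F in hF1.
  replace (SS / F - kf w / (2 * c * (1 - p))) with ((2 * SS - kf w * F / (c * (1 - p))) / (2 * F))
    by (field; lra).
  unfold Rdiv at 1. rewrite Rabs_mult, (Rabs_pos_eq (/ (2 * F))) by (left; apply Rinv_0_lt_compat; lra).
  apply (Rmult_lt_reg_r (2 * F)). lra.
  rewrite Rmult_assoc, Rinv_l, Rmult_1_r by lra. lra.
Qed.

Theorem corollary4 (c p : R) (hc : 0 < c) (hp0 : 0 < p) (hp1 : p < 1) :
  exists L : R -> R,
    (forall w : R, 0 < L w) /\
    (forall K : R -> Prop, compact K ->
       forall eps : R, 0 < eps ->
       exists N : nat, forall n : nat, (N <= n)%nat ->
         forall w : R, K w ->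
           Rabs (sqsum (gam c p) n w / Rpower (INR n + 1) (1 - p) - L w) < eps).
Proof.
  assert (hp : 0 < p < 1) by lra.
  pose (kf := fun w => proj1_sig (constructive_indefinite_description _ (K_lim c p w hc hp))).
  assert (hkf : forall w, Un_cv (KK (gam c p) w) (kf w)).
  { intro w. unfold kf. apply proj2_sig. }
  exists (fun w => kf w / (2 * c * (1 - p))). split.
  - intro w. apply Rdiv_lt_0_compat; [|nra].
    pose proof (Rabs_pos w).
    destruct (m0_exists c p (Rabs w) hc hp H) as [m0 [h1 h2]].
    destruct (Kinfo c p (Rabs w) m0 w (kf w) hc hp H h1 h2 (Rle_refl _) (hkf w)) as [A [B _]].
    lra.
  - intros K hK eps he.
    destruct (compact_P1 K hK) as [a [b hab]].
    destruct (main_unif c p kf hc hp hkf (Rabs a + Rabs b) ltac:(pose proof (Rabs_pos a); pose proof (Rabs_pos b); lra) eps he)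
      as [N HN].
    exists N. intros n hn w hw. apply HN; auto.
    destruct (hab w hw). apply Rabs_le. pose proof (Rle_abs a). pose proof (Rle_abs (-a)). rewrite Rabs_Ropp in H2.
    pose proof (Rle_abs b). pose proof (Rle_abs (-b)). rewrite Rabs_Ropp in H4.
    pose proof (Rabs_pos a). pose proof (Rabs_pos b). lra.
Qed.
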